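(* Let $h>0$, $n\in\mathbb{N}$, and let $\lambda:\mathbb{T}\to\mathbb{R}$ be an $n$-cycle with values $\lambda_0,\dots,\lambda_{n-1}\in\mathbb{R}\setminus\{\pm\tfrac1h\}$, such that $0<|e_{\lambda}(nh)|\neq1$ and $0<|e_{-\lambda}(nh)|\neq1$. Define for $t\in\mathbb{T}$ $$p(t)=-\lambda(t+2h),\quad q(t)=\Delta_h\lambda(t+h)-\lambda(t+h)\lambda(t+2h),$$ $$r(t)=\Delta_h^2\lambda(t)-\lambda(t+h)\Delta_h\lambda(t+h)-\bigl(\lambda(t+h)+\lambda(t+2h)\bigr)\Delta_h\lambda(t)+\lambda(t)\lambda(t+h)\lambda(t+2h).$$ Then the third-order equation $$\Delta_h^3y(t)+p(t)\Delta_h^2y(t)+q(t)\Delta_h y(t)+r(t)y(t)=0,\qquad t\in\mathbb{T},$$ has Hyers–Ulam stability on $\mathbb{T}$ with Hyers–Ulam stability constant $K=\bigl(K_0(\lambda)\bigr)^2K_0(-\lambda)$.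
   Context: Fix $h>0$ and let $\mathbb{T}=\{0,h,2h,3h,\dots\}$. For $x:\mathbb{T}\to\mathbb{R}$, $\Delta_h x(t)=\frac{x(t+h)-x(t)}{h}$ and $\Delta_h^2x=\Delta_h(\Delta_h x)$, $\Delta_h^3x=\Delta_h(\Delta_h^2 x)$. An $n$-cycle is a function $\mu:\mathbb{T}\to\mathbb{R}$ with $\mu(t)=\mu_k$ whenever $t/h\equiv k\pmod n$, $k\in\{0,\dots,n-1\}$, which has period $n$ and no smaller period. For such $\mu$ define the discrete exponential $e_\mu(t)=\prod_{k=0}^{t/h-1}(1+h\mu(kh))$ (empty product $=1$), so $e_\mu(nh)=\prod_{k=0}^{n-1}(1+h\mu_k)$. For $k\in\{0,\dots,n-1\}$ define $$S_k(\mu)=\sum_{j=1}^{n}\prod_{i=0}^{j-1}\frac{1}{|1+h\mu_{(k+i)\bmod n}|},$$ (e.g. $S_0(\mu)=\frac{1}{|1+h\mu_0|}+\frac{1}{|1+h\mu_0||1+h\mu_1|}+\dots+\frac{1}{|1+h\mu_0|\cdots|1+h\mu_{n-1}|}$), and, when $0<|e_\mu(nh)|\neq1$, $$K_0(\mu)=\frac{h|e_\mu(nh)|}{\bigl|1-|e_\mu(nh)|\bigr|}\max\{S_0(\mu),\dots,S_{n-1}(\mu)\}.$$ Here $-\lambda$ denotes the $n$-cycle with values $-\lambda_0,\dots,-\lambda_{n-1}$. Hyers–Ulam stability: an equation $\mathcal{L}[y](t)=f(t)$, $t\in\mathbb{T}$ (with $\mathcal{L}$ a linear difference operator) has Hyers–Ulam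 stability on $\mathbb{T}$ with Hyers–Ulam stability constant $K>0$ if for every $\varepsilon>0$ and every $\xi:\mathbb{T}\to\mathbb{R}$ with $|\mathcal{L}[\xi](t)-f(t)|\le\varepsilon$ for all $t\in\mathbb{T}$, there is a solution $y:\mathbb{T}\to\mathbb{R}$ of the equation with $|\xi(t)-y(t)|\le K\varepsilon$ for all $t\in\mathbb{T}$. The minimum Hyers–Ulam stability constant is the smallest such $K$. *)

(* Defs.v *)
From Stdlib Require Import Reals Lra Lia.
Open Scope R_scope.

(* A function x : T -> R, T = {0,h,2h,...}, is represented by
   x : nat -> R with x k = value at t = k*h. *)

Definition dh (h : R) (x : nat -> R) : nat -> R :=
  fun k => (x (S k) - x k) / h.

Fixpoint prodR (m : nat) (f : nat -> R) : R :=
  match m with O => 1 | S m' => prodR m' f * f m' end.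
Fixpoint sumR (m : nat) (f : nat -> R) : R :=
  match m with O => 0 | S m' => sumR m' f + f m' end.
Fixpoint maxR (m : nat) (f : nat -> R) : R :=
  match m with
  | O => 0
  | S O => f O
  | S m' => Rmax (maxR m' f) (f m')
  end.

Definition is_ncycle (n : nat) (mu : nat -> R) : Prop :=
  (0 < n)%nat /\
  (forall k, mu (k + n)%nat = mu k) /\
  (forall m, (0 < m < n)%nat -> ~ (forall k, mu (k + m)%nat = mu k)).

(* e_mu(t) at t = k h *)
Definition e_disc (h : R) (mu : nat -> R) (k : nat) : R :=
  prodR k (fun j => 1 + h * mu j).

Definition S_k (h : R) (n : nat) (mu : nat -> R) (k : nat) : R :=
  sumR n (fun j' => prodR (S j')
             (fun i => / Rabs (1 + h * mu ((k + i) mod n)%nat))).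

Definition K0 (h : R) (n : nat) (mu : nat -> R) : R :=
  h * Rabs (e_disc h mu n) / Rabs (1 - Rabs (e_disc h mu n))
    * maxR n (S_k h n mu).

Definition negf (mu : nat -> R) : nat -> R := fun k => - mu k.

Definition HU_stable (L : (nat -> R) -> nat -> R) (K : R) : Prop :=
  0 < K /\
  forall eps : R, 0 < eps ->
  forall xi : nat -> R, (forall t, Rabs (L xi t) <= eps) ->
  exists y : nat -> R, (forall t, L y t = 0) /\
    (forall t, Rabs (xi t - y t) <= K * eps).

(* Main.v *)
Require Import Defs.
From Stdlib Require Import Reals Lra Lia FunctionalExtensionality.
Open Scope R_scope.

Lemma prodR_ext m f g : (forall i, (i < m)%nat -> f i = g i) -> prodR m f = prodR m g.
Proof. induction m; simpl; intros H; auto. rewrite IHm by (intros; apply H; lia). rewrite H by lia. auto. Qed.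
Lemma sumR_ext m f g : (forall i, (i < m)%nat -> f i = g i) -> sumR m f = sumR m g.
Proof. induction m; simpl; intros H; auto. rewrite IHm by (intros; apply H; lia). rewrite H by lia. auto. Qed.
Lemma prodR_Sl m f : prodR (S m) f = f 0%nat * prodR m (fun i => f (S i)).
Proof. induction m. simpl; ring. change (prodR (S (S m)) f) with (prodR (S m) f * f (S m)). rewrite IHm. simpl. ring. Qed.
Lemma sumR_Sl m f : sumR (S m) f = f 0%nat + sumR m (fun i => f (S i)).
Proof. induction m. simpl; ring. change (sumR (S (S m)) f) with (sumR (S m) f + f (S m)). rewrite IHm. simpl. ring. Qed.
Lemma sumR_scal m c f : sumR m (fun j => c * f j) = c * sumR m f.
Proof. induction m; simpl. ring. rewrite IHm; ring. Qed.
Lemma prodR_add m p f : prodR (m+p) f = prodR m f * prodR p (fun i => f (m+i)%nat).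
Proof. induction p. rewrite Nat.add_0_r; simpl; ring. rewrite Nat.add_succ_r. simpl. rewrite IHp. ring. Qed.
Lemma prodR_inv_abs m f : prodR m (fun i => / Rabs (f i)) = / Rabs (prodR m f).
Proof. induction m; simpl. rewrite Rabs_R1, Rinv_1; auto. rewrite IHm, Rabs_mult, Rinv_mult. reflexivity. Qed.
Lemma prodR_nz m f : (forall i, f i <> 0) -> prodR m f <> 0.
Proof. intros H; induction m; simpl. lra. apply Rmult_integral_contrapositive; auto. Qed.
Lemma prodR_pos m f : (forall i, 0 < f i) -> 0 < prodR m f.
Proof. intros H; induction m; simpl. lra. apply Rmult_lt_0_compat; auto. Qed.
Lemma sumR_pos m f : (0 < m)%nat -> (forall i, 0 < f i) -> 0 < sumR m f.
Proof. intros Hm H; induction m. lia. simpl. destruct m. simpl. specialize (H 0%nat); lra.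
  specialize (IHm ltac:(lia)). specialize (H (S m)). lra. Qed.

Lemma prodR_shift a n (Hper : forall k, a (k+n)%nat = a k) (Hnz : forall k, a k <> 0) m :
  prodR n (fun i => a (m+i)%nat) = prodR n a.
Proof.
  induction m.
  - apply prodR_ext; intros; rewrite Nat.add_0_l; auto.
  - assert (H1 : prodR (S n) (fun i => a (m+i)%nat) = prodR n (fun i => a (m+i)%nat) * a (m+n)%nat) by reflexivity.
    rewrite prodR_Sl, Hper, Nat.add_0_r in H1.
    rewrite (prodR_ext n _ (fun i => a (m + S i)%nat)) by (intros; f_equal; lia).
    rewrite <- IHm. apply (Rmult_eq_reg_l (a m)); auto. lra.
Qed.

Lemma prodR_pow a n (Hper : forall k, a (k+n)%nat = a k) (Hnz : forall k, a k <> 0) q :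
  prodR (q*n) a = (prodR n a)^q.
Proof.
  induction q. simpl; auto.
  change (S q * n)%nat with (n + q*n)%nat. rewrite Nat.add_comm, prodR_add, prodR_shift by auto.
  rewrite IHq. simpl. ring.
Qed.

Lemma maxR_ge n f k : (k < n)%nat -> f k <= maxR n f.
Proof.
  induction n; intros Hk. lia.
  destruct n. replace k with 0%nat by lia. simpl; lra.
  change (maxR (S (S n)) f) with (Rmax (maxR (S n) f) (f (S n))).
  destruct (Nat.eq_dec k (S n)). subst. apply Rmax_r.
  eapply Rle_trans. apply IHn; lia. apply Rmax_l.
Qed.

Fixpoint fwd (a d : nat -> R) (v : R) (k : nat) : R :=
  match k with O => v | S k' => a k' * fwd a d v k' + d k' end.
Fixpoint back (a d : nat -> R) (m k : nat) : R :=
  match m with O => 0 | S m' => (back a d m' (S k) - d k) / a k end.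

Lemma core_decay a W d delta :
  0 <= delta -> (forall k, 0 <= W k) -> (forall k, W (S k) = Rabs (a k) * W k + 1) ->
  (forall k, Rabs (d k) <= delta) ->
  exists z, (forall k, z (S k) = a k * z k + d k) /\ (forall k, Rabs (z k) <= delta * W k).
Proof.
  intros Hd HW HR Hdk. exists (fwd a d 0). split. intros; reflexivity.
  induction k; simpl. rewrite Rabs_R0. apply Rmult_le_pos; auto.
  eapply Rle_trans. apply Rabs_triang. rewrite Rabs_mult, HR.
  assert (Rabs (a k) * Rabs (fwd a d 0 k) <= Rabs (a k) * (delta * W k)) by
    (apply Rmult_le_compat_l; auto; apply Rabs_pos).
  specialize (Hdk k). nra.
Qed.

Section Growth.
Variables (a d W : nat -> R) (delta Wm : R).
Hypotheses (Hdel : 0 <= delta) (HW : forall k, 0 <= W k) (HWm : forall k, W k <= Wm)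
  (HR : forall k, W (S k) + 1 = Rabs (a k) * W k) (Hnz : forall k, a k <> 0)
  (Hdk : forall k, Rabs (d k) <= delta)
  (Hgrow : forall e, 0 < e -> exists N, delta * Wm < e * Rabs (prodR N a)).

Lemma back_bound m : forall k, Rabs (back a d m k) <= delta * W k.
Proof.
  induction m; intros k; simpl. rewrite Rabs_R0. apply Rmult_le_pos; auto.
  assert (Ha : 0 < Rabs (a k)) by (apply Rabs_pos_lt; auto).
  assert (H1 : Rabs (back a d m (S k) - d k) <= delta * (W (S k) + 1)).
  { unfold Rminus. eapply Rle_trans. apply Rabs_triang. rewrite Rabs_Ropp.
    specialize (IHm (S k)). specialize (Hdk k). lra. }
  unfold Rdiv. rewrite Rabs_mult, Rabs_inv.
  replace (delta * W k) with (delta * (W (S k) + 1) * / Rabs (a k)).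
  apply Rmult_le_compat_r; auto. left; apply Rinv_0_lt_compat; auto.
  rewrite HR. field. lra.
Qed.

Lemma back_diff m : forall p k, back a d (m+p) k - back a d m k =
  back a d p (k+m) / prodR m (fun i => a (k+i)%nat).
Proof.
  induction m; intros p k.
  - simpl. rewrite Nat.add_0_r. field.
  - change (S m + p)%nat with (S (m+p)). cbn [back].
    replace ((back a d (m+p) (S k) - d k)/a k - (back a d m (S k) - d k)/a k) with
      ((back a d (m+p) (S k) - back a d m (S k))/a k) by (field; auto).
    rewrite IHm, prodR_Sl.
    rewrite (prodR_ext m (fun i => a (k + S i)%nat) (fun i => a (S k + i)%nat)) by (intros; f_equal; lia).
    replace (k + S m)%nat with (S k + m)%nat by lia. rewrite Nat.add_0_r. field.
    split; auto. apply prodR_nz; auto.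
Qed.

Lemma fwd_back k : forall m, fwd a d (back a d (m+k) 0) k = back a d m k.
Proof.
  induction k; intros m. simpl. rewrite Nat.add_0_r; auto.
  cbn [fwd]. replace (m + S k)%nat with (S m + k)%nat by lia. rewrite IHk. cbn [back].
  field; auto.
Qed.

Lemma fwd_diff v v' k : fwd a d v k - fwd a d v' k = prodR k a * (v - v').
Proof.
  induction k; simpl. ring.
  replace (a k * fwd a d v k + d k - (a k * fwd a d v' k + d k)) with (a k * (fwd a d v k - fwd a d v' k)) by ring.
  rewrite IHk. ring.
Qed.

Lemma core_growth :
  exists z, (forall k, z (S k) = a k * z k + d k) /\ (forall k, Rabs (z k) <= delta * W k).
Proof.
  assert (HC : Cauchy_crit (fun m => back a d m 0)).
  { intros eps Heps. destruct (Hgrow (eps/2)) as [N HN]. lra.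
    assert (Hb : forall m, (m >= N)%nat -> Rabs (back a d m 0 - back a d N 0) < eps/2).
    { intros m Hm. replace m with (N + (m-N))%nat by lia. rewrite back_diff.
      rewrite (prodR_ext N _ a) by (intros; f_equal).
      assert (HP : 0 < Rabs (prodR N a)) by (apply Rabs_pos_lt, prodR_nz; auto).
      unfold Rdiv. rewrite Rabs_mult, Rabs_inv.
      apply (Rmult_lt_reg_r (Rabs (prodR N a))); auto.
      rewrite Rmult_assoc, Rinv_l by lra. rewrite Rmult_1_r.
      eapply Rle_lt_trans. apply back_bound. eapply Rle_lt_trans; [|apply HN].
      apply Rmult_le_compat_l; auto. }
    exists N. intros m1 m2 H1 H2. unfold Rdist.
    replace (back a d m1 0 - back a d m2 0) with ((back a d m1 0 - back a d N 0) - (back a d m2 0 - back a d N 0)) by ring.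
    unfold Rminus at 1. eapply Rle_lt_trans. apply Rabs_triang. rewrite Rabs_Ropp.
    pose proof (Hb m1 H1). pose proof (Hb m2 H2). lra. }
  destruct (R_complete _ HC) as [l Hl].
  exists (fwd a d l). split. intros; reflexivity.
  intros k. apply Rle_plus_epsilon. intros eps Heps.
  set (P := Rabs (prodR k a)).
  assert (HP : 0 <= P) by apply Rabs_pos.
  destruct (Hl (eps / (P + 1))) as [N HN]. apply Rlt_gt, Rdiv_lt_0_compat; lra.
  specialize (HN (N + k)%nat ltac:(lia)). unfold Rdist in HN.
  replace (fwd a d l k) with ((fwd a d l k - fwd a d (back a d (N+k) 0) k) + fwd a d (back a d (N+k) 0) k) by ring.
  eapply Rle_trans. apply Rabs_triang. rewrite fwd_diff, fwd_back, Rabs_mult.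
  fold P. rewrite Rabs_minus_sym in HN.
  assert (P * Rabs (l - back a d (N+k) 0) <= P * (eps / (P+1))) by (apply Rmult_le_compat_l; lra).
  assert (P * (eps / (P+1)) <= eps).
  { apply (Rmult_le_reg_r (P+1)). lra. unfold Rdiv. rewrite Rmult_assoc, Rmult_assoc, Rinv_l by lra. nra. }
  pose proof (back_bound N k). lra.
Qed.
End Growth.

Definition Fop (h : R) (mu : nat -> R) (y : nat -> R) : nat -> R :=
  fun k => dh h y k - mu k * y k.

Lemma per_mult (mu : nat -> R) n (Hper : forall k, mu (k+n)%nat = mu k) q y : mu (y + q*n)%nat = mu y.
Proof. induction q. rewrite Nat.mul_0_l, Nat.add_0_r; auto.
  change (S q * n)%nat with (n + q*n)%nat. replace (y + (n + q*n))%nat with (y + q*n + n)%nat by lia.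
  rewrite Hper; auto. Qed.

Lemma per_mod (mu : nat -> R) n (Hn : (0 < n)%nat) (Hper : forall k, mu (k+n)%nat = mu k) x i :
  mu ((x mod n) + i)%nat = mu (x + i)%nat.
Proof.
  rewrite <- (per_mult mu n Hper (x / n) (x mod n + i)). f_equal.
  pose proof (Nat.div_mod_eq x n). lia.
Qed.

Lemma fo h n mu s : 0 < h -> (0 < n)%nat -> (forall k, mu (k+n)%nat = mu k) ->
  (forall k, 1 + h * mu k <> 0) -> 0 < Rabs (e_disc h mu n) -> Rabs (e_disc h mu n) <> 1 ->
  forall eps g xi, 0 < eps ->
  (forall t, Rabs (Fop h (fun k => mu (k+s)%nat) xi t - g t) <= eps) ->
  exists y, (forall t, Fop h (fun k => mu (k+s)%nat) y t = g t) /\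
    (forall t, Rabs (xi t - y t) <= K0 h n mu * eps).
Proof.
  intros Hh Hn Hper Hnz HE0 HE1 eps g xi Heps Hxi.
  set (a := fun k => 1 + h * mu (k+s)%nat).
  assert (Haper : forall k, a (k+n)%nat = a k).
  { intros k; unfold a. replace (k+n+s)%nat with (k+s+n)%nat by lia. rewrite Hper; auto. }
  assert (Hanz : forall k, a k <> 0) by (intros; apply Hnz).
  assert (HP : prodR n a = e_disc h mu n).
  { unfold e_disc. set (b := fun j => 1 + h * mu j).
    assert (Hbper : forall k, b (k+n)%nat = b k) by (intros; unfold b; rewrite Hper; auto).
    rewrite <- (prodR_shift b n Hbper (fun k => Hnz k) s). apply prodR_ext.
    intros; unfold a, b; do 3 f_equal; lia. }
  set (E := Rabs (e_disc h mu n)) in *.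
  set (c := E / Rabs (1 - E)).
  assert (Hc : 0 < c).
  { unfold c. apply Rdiv_lt_0_compat; auto. apply Rabs_pos_lt. intro; apply HE1; lra. }
  set (T := fun k => sumR n (fun j => prodR (S j) (fun i => / Rabs (a (k+i)%nat)))).
  assert (HTpos : forall k, 0 < T k).
  { intros k; apply sumR_pos; auto. intros; apply prodR_pos. intros.
    apply Rinv_0_lt_compat, Rabs_pos_lt; auto. }
  assert (HTrec : forall k, Rabs (a k) * T k = 1 + T (S k) - / E).
  { intros k. destruct n as [|n']. lia.
    set (G := fun j => prodR j (fun i => / Rabs (a (S k + i)%nat))).
    assert (HG : sumR (S n') G = 1 + T (S k) - / E).
    { rewrite sumR_Sl.
      assert (T (S k) = sumR n' (fun i => G (S i)) + G (S n')) by reflexivity.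
      assert (G (S n') = / E).
      { unfold G. rewrite prodR_inv_abs. rewrite prodR_shift by auto. rewrite HP. reflexivity. }
      unfold G at 1. simpl prodR. lra. }
    assert (HT : T k = / Rabs (a k) * sumR (S n') G).
    { unfold T. rewrite <- sumR_scal. apply sumR_ext. intros j _.
      rewrite prodR_Sl, Nat.add_0_r. f_equal. apply prodR_ext. intros.
      replace (k + S i)%nat with (S k + i)%nat by lia. reflexivity. }
    rewrite HT, HG. field. split; [lra | apply Rabs_no_R0; auto]. }
  set (M := maxR n (S_k h n mu)).
  assert (HTM : forall k, T k <= M).
  { intros k. unfold M. replace (T k) with (S_k h n mu ((k+s) mod n)).
    apply maxR_ge. apply Nat.mod_upper_bound; lia.
    unfold S_k, T. apply sumR_ext. intros j _. apply prodR_ext. intros i _.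
    unfold a. assert (Hm : forall x, mu (x mod n) = mu x).
    { intros x. pose proof (per_mod mu n Hn Hper x 0). rewrite !Nat.add_0_r in H. auto. }
    rewrite Hm, per_mod by auto. do 5 f_equal. lia. }
  set (W := fun k => c * T k).
  set (d := fun k => xi (S k) - a k * xi k - h * g k).
  assert (Hd : forall k, Rabs (d k) <= h * eps).
  { intros k. specialize (Hxi k).
    replace (d k) with (h * (Fop h (fun k => mu (k+s)%nat) xi k - g k)).
    rewrite Rabs_mult, Rabs_pos_eq by lra. apply Rmult_le_compat_l; lra.
    unfold d, Fop, dh, a. field. lra. }
  assert (Hz : exists z, (forall k, z (S k) = a k * z k + d k) /\ (forall k, Rabs (z k) <= h * eps * W k)).
  { destruct (Rlt_or_le E 1) as [Hlt | Hge].
    - apply core_decay; auto. nra. intros; unfold W; left; apply Rmult_lt_0_compat; auto.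
      intros k. unfold W. replace (c * T (S k)) with (c * (Rabs (a k) * T k) + c * (/ E - 1)) by (rewrite HTrec; ring).
      replace (c * (/E - 1)) with 1. ring.
      unfold c. rewrite Rabs_pos_eq by lra. field. split; lra.
    - assert (Hgt : 1 < E) by (destruct Hge; auto; exfalso; apply HE1; auto).
      apply (core_growth a d W (h*eps) (c*M)); auto.
      + nra.
      + intros; unfold W; left; apply Rmult_lt_0_compat; auto.
      + intros; unfold W; apply Rmult_le_compat_l; auto; lra.
      + intros k. unfold W. replace (c * T (S k)) with (c * (Rabs (a k) * T k) + c * (/ E - 1)) by (rewrite HTrec; ring).
        replace (c * (/E - 1)) with (-1). ring.
        unfold c. rewrite Rabs_minus_sym, Rabs_pos_eq by lra. field. split; lra.
      + intros e He. destruct (Pow_x_infinity (prodR n a)) with (b := h*eps*(c*M)/e + 1) as [N0 HN0].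
        rewrite HP; fold E; lra.
        exists (N0 * n)%nat. rewrite prodR_pow by auto. specialize (HN0 N0 (le_n _)).
        apply (Rmult_lt_reg_r (/ e)). apply Rinv_0_lt_compat; auto.
        replace (e * Rabs (prodR n a ^ N0) * / e) with (Rabs (prodR n a ^ N0)) by (field; lra).
        lra. }
  destruct Hz as [z [Hz1 Hz2]].
  exists (fun k => xi k - z k). split.
  - intros t. unfold Fop, dh. rewrite Hz1. unfold d, a. field. lra.
  - intros t. replace (xi t - (xi t - z t)) with (z t) by ring.
    eapply Rle_trans. apply Hz2. unfold W, K0. fold E. fold M.
    replace (h * E / Rabs (1 - E) * M * eps) with (h * eps * c * M) by (unfold c; field; apply Rabs_no_R0; intro; apply HE1; lra).
    rewrite <- Rmult_assoc. apply Rmult_le_compat_l; [|apply HTM]. left; assert (0 < h*eps) by nra; nra.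
Qed.

Lemma K0_pos h n mu : 0 < h -> (0 < n)%nat -> (forall k, 1 + h * mu k <> 0) ->
  0 < Rabs (e_disc h mu n) -> Rabs (e_disc h mu n) <> 1 -> 0 < K0 h n mu.
Proof.
  intros Hh Hn Hnz H0 H1. unfold K0.
  assert (0 < Rabs (1 - Rabs (e_disc h mu n))) by (apply Rabs_pos_lt; intro; apply H1; lra).
  assert (0 < maxR n (S_k h n mu)).
  { eapply Rlt_le_trans; [|apply (maxR_ge n _ 0%nat Hn)]. unfold S_k. apply sumR_pos; auto.
    intros; apply prodR_pos; intros; apply Rinv_0_lt_compat, Rabs_pos_lt; auto. }
  apply Rmult_lt_0_compat; auto. apply Rdiv_lt_0_compat; auto. nra.
Qed.

Theorem theorem5p5 (h : R) (n : nat) (lam : nat -> R) :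
  0 < h ->
  is_ncycle n lam ->
  (forall k, lam k <> 1 / h /\ lam k <> - (1 / h)) ->
  0 < Rabs (e_disc h lam n) -> Rabs (e_disc h lam n) <> 1 ->
  0 < Rabs (e_disc h (negf lam) n) -> Rabs (e_disc h (negf lam) n) <> 1 ->
  let p := fun k => - lam (k + 2)%nat in
  let q := fun k => dh h lam (k + 1)%nat - lam (k + 1)%nat * lam (k + 2)%nat in
  let r := fun k =>
      dh h (dh h lam) k - lam (k + 1)%nat * dh h lam (k + 1)%nat
      - (lam (k + 1)%nat + lam (k + 2)%nat) * dh h lam k
      + lam k * lam (k + 1)%nat * lam (k + 2)%nat in
  HU_stable
    (fun y k => dh h (dh h (dh h y)) k + p k * dh h (dh h y) k
                + q k * dh h y k + r k * y k)
    ((K0 h n lam) ^ 2 * K0 h n (negf lam)).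
Proof.
  intros Hh [Hn [Hper _]] Hl HE0 HE1 HF0 HF1 p q r.
  assert (Hnz : forall k, 1 + h * lam k <> 0).
  { intros k H. apply (proj2 (Hl k)). assert (h * lam k = -1) by lra.
    apply (Rmult_eq_reg_l h); [|lra]. rewrite H0. field. lra. }
  assert (Hnz' : forall k, 1 + h * negf lam k <> 0).
  { intros k H. apply (proj1 (Hl k)). unfold negf in H. assert (h * lam k = 1) by lra.
    apply (Rmult_eq_reg_l h); [|lra]. rewrite H0. field. lra. }
  assert (Hper' : forall k, negf lam (k+n)%nat = negf lam k) by (intros; unfold negf; rewrite Hper; auto).
  pose proof (K0_pos h n lam Hh Hn Hnz HE0 HE1) as HK.
  pose proof (K0_pos h n (negf lam) Hh Hn Hnz' HF0 HF1) as HK'.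
  match goal with |- HU_stable ?L _ => set (LL := L) end.
  set (F1 := Fop h (fun k => negf lam (k+0)%nat)).
  set (F2 := Fop h (fun k => lam (k+1)%nat)).
  set (F3 := Fop h (fun k => lam (k+2)%nat)).
  assert (HL : forall y k, LL y k = F3 (F2 (F1 y)) k).
  { intros y k. unfold LL, F1, F2, F3, Fop, p, q, r, negf. cbv beta. unfold dh.
    repeat rewrite ?Nat.add_succ_l, ?Nat.add_succ_r, ?Nat.add_0_r. field. lra. }
  split. apply Rmult_lt_0_compat; auto. simpl. nra.
  intros eps Heps xi Hxi.
  destruct (fo h n lam 2 Hh Hn Hper Hnz HE0 HE1 eps (fun _ => 0) (F2 (F1 xi)) Heps) as [w2 [Hw2a Hw2b]].
  { intros t. rewrite Rminus_0_r. fold F3. rewrite <- HL. auto. }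
  assert (He2 : 0 < K0 h n lam * eps) by nra.
  destruct (fo h n lam 1 Hh Hn Hper Hnz HE0 HE1 _ w2 (F1 xi) He2) as [w1 [Hw1a Hw1b]].
  { intros t. fold F2. auto. }
  assert (He3 : 0 < K0 h n lam * (K0 h n lam * eps)) by nra.
  destruct (fo h n (negf lam) 0 Hh Hn Hper' Hnz' HF0 HF1 _ w1 xi He3) as [y [Hya Hyb]].
  { intros t. fold F1. auto. }
  exists y. split.
  - intros t. rewrite HL. fold F1 in Hya. fold F2 in Hw1a. fold F3 in Hw2a.
    replace (F1 y) with w1 by (apply functional_extensionality; intros; rewrite Hya; auto).
    replace (F2 w1) with w2 by (apply functional_extensionality; intros; rewrite Hw1a; auto).
    apply Hw2a.
  - intros t. eapply Rle_trans. apply Hyb. right. simpl. ring.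
Qed.
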